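(* Let $\alpha=(\alpha_k)_{k\in\mathbb{N}}\in\ell^2$ and let $I=[a,b]$ be an interval in $\mathbb{N}$ ($a\le b$). Then $$\tfrac12 J(I)\le K(I)=\tfrac{1}{\sqrt2}L(I)\le 2J(I).$$
   Context: $\mathbb{N}=\{0,1,2,\dots\}$; intervals are sets $[a,b]\cap\mathbb{N}$. Notation: $\|f\|_{2,I}=(\sum_{k\in I}|f(k)|^2)^{1/2}$, $\mu(I)=\sum_{k\in I}|\alpha_k|^2$, $S_f(k)=\sum_{j=0}^k f(j)$, and for $\mu(I)>0$, $(S_f)_I=\mu(I)^{-1}\sum_{k\in I}S_f(k)|\alpha_k|^2$. $L(I)$: with $l(I,f)=\sum_{k\in I}\sum_{n\in I\setminus\{k\}}|\alpha_k\alpha_n\sum_{j=\min(k,n)+1}^{\max(k,n)}f(j)|^2$, set $L(I)=(\sup_{\|f\|_{2,I}\le1}l(I,f)/\mu(I))^{1/2}$ (sup over $f\in\ell^2$ supported in $I$), and $L(I)=0$ if $\alpha$ vanishes on $I$. $K(I)=\sup_{\|f\|_{2,I}\le1}\big(\sum_{k\in I}|S_f(k)-(S_f)_I|^2|\alpha_k|^2\big)^{1/2}$ (sup over $f\in\ell^2$ supported in $I$; this is $0$ if $\alpha$ vanishes on $I$). $J(I)=\inf_{c\in I}\max(A_c,B_c)$ where $A_c=\sup_{a\le s\le c}(c-s)^{1/2}(\sum_{k=a}^s|\alpha_k|^2)^{1/2}$ and $B_c=\sup_{c\le s\le b}(s-c)^{1/2}(\sum_{k=s}^b|\alpha_k|^2)^{1/2}$.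 *)

(* Defs.v *)
From HB Require Import structures.
From mathcomp Require Import all_boot all_order all_algebra.
From mathcomp Require Import all_classical all_reals all_analysis.
From mathcomp Require Import complex.
Set Implicit Arguments. Unset Strict Implicit. Unset Printing Implicit Defensive.
Import Order.TTheory GRing.Theory Num.Theory numFieldNormedType.Exports.
Local Open Scope ring_scope.
Local Open Scope classical_set_scope.
Local Open Scope complex_scope.

Section Defs.
Variable R : realType.
Implicit Types (alpha f : nat -> R[i]) (a b c k : nat).

Definition cabs (z : R[i]) : R := Normc.normc z.

Definition in_l2 alpha : Prop := cvgn (series (fun k : nat => (cabs (alpha k) ^+ 2 : R^o))).

Definition supported_in a b f : Prop := forall k, ~~ (a <= k <= b)%N -> f k = 0.

Definition norm2I a b f : R := Num.sqrt (\sum_(a <= k < b.+1) cabs (f k) ^+ 2).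

Definition muI alpha a b : R := \sum_(a <= k < b.+1) cabs (alpha k) ^+ 2.

Definition Sf f k : R[i] := \sum_(0 <= j < k.+1) f j.

(* (S_f)_I ; only used when mu(I) > 0 *)
Definition SfI alpha a b f : R[i] :=
  ((muI alpha a b)^-1)%:C * \sum_(a <= k < b.+1) Sf f k * ((cabs (alpha k)) ^+ 2)%:C.

Definition admissible a b f : Prop := supported_in a b f /\ norm2I a b f <= 1.

Definition lIf alpha a b f : R :=
  \sum_(a <= k < b.+1) \sum_(a <= n < b.+1 | n != k)
     cabs (alpha k * alpha n * \sum_((minn k n).+1 <= j < (maxn k n).+1) f j) ^+ 2.

Definition LI alpha a b : R :=
  if muI alpha a b == 0 then 0
  else Num.sqrt (sup [set lIf alpha a b f / muI alpha a b | f in admissible a b]).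

Definition KI alpha a b : R :=
  sup [set Num.sqrt (\sum_(a <= k < b.+1)
          cabs (Sf f k - SfI alpha a b f) ^+ 2 * cabs (alpha k) ^+ 2)
      | f in admissible a b].

Definition Ac alpha a c : R :=
  sup [set Num.sqrt ((c - s)%:R) * Num.sqrt (\sum_(a <= k < s.+1) cabs (alpha k) ^+ 2)
      | s in [set s : nat | (a <= s <= c)%N]].

Definition Bc alpha b c : R :=
  sup [set Num.sqrt ((s - c)%:R) * Num.sqrt (\sum_(s <= k < b.+1) cabs (alpha k) ^+ 2)
      | s in [set s : nat | (c <= s <= b)%N]].

Definition JI alpha a b : R :=
  inf [set Num.max (Ac alpha a c) (Bc alpha b c) | c in [set c : nat | (a <= c <= b)%N]].

End Defs.

(* Main.v *)
Require Import Defs.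
From HB Require Import structures.
From mathcomp Require Import all_boot all_order all_algebra.
From mathcomp Require Import all_classical all_reals all_analysis.
From mathcomp Require Import complex.
From mathcomp Require Import ring lra zify.
Import Order.TTheory GRing.Theory Num.Theory.
Local Open Scope ring_scope.
Local Open Scope complex_scope.
Section H.
Variable R : realFieldType.
Implicit Types (w g : nat -> R).

Definition Ps g k : R := \sum_(0 <= j < k) g j.

Lemma Ps_S g k : Ps g k.+1 = Ps g k + g k.
Proof. by rewrite /Ps big_nat_recr. Qed.

Lemma Ps_ge0 g k : (forall j, 0 <= g j) -> 0 <= Ps g k.
Proof. by move=> h; rewrite /Ps; apply: sumr_ge0. Qed.

Lemma abel w g n :
  \sum_(0 <= i < n) w i * Ps g i.+1 ^+ 2 =
  \sum_(0 <= k < n) (\sum_(k <= i < n) w i) * (Ps g k.+1 ^+ 2 - Ps g k ^+ 2).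
Proof.
elim: n => [|n IH]; first by rewrite !big_geq.
rewrite big_nat_recr //= IH [RHS]big_nat_recr //= big_nat1.
have -> : \sum_(0 <= k < n) (\sum_(k <= i < n.+1) w i) * (Ps g k.+1 ^+ 2 - Ps g k ^+ 2)
   = \sum_(0 <= k < n) (\sum_(k <= i < n) w i) * (Ps g k.+1 ^+ 2 - Ps g k ^+ 2)
     + w n * \sum_(0 <= k < n) (Ps g k.+1 ^+ 2 - Ps g k ^+ 2).
  rewrite mulr_sumr -big_split /=; apply: eq_big_nat => k /andP[_ kn].
  by rewrite big_nat_recr 1?ltnW //= mulrDl.
rewrite telescope_sumr // -addrA -mulrDr; congr (_ + _ * _).
have -> : Ps g 0 = 0 by rewrite /Ps big_geq.
by rewrite expr0n /= subr0 addrC subrK.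
Qed.

Lemma hardy_step g k :
  (Ps g k.+1 ^+ 2 - Ps g k ^+ 2) / k.+1%:R <=
  4 * g k ^+ 2 + (Ps g k ^+ 2 / k%:R - Ps g k.+1 ^+ 2 / k.+1%:R).
Proof.
rewrite Ps_S; case: k => [|k].
  have -> : Ps g 0 = 0 by rewrite /Ps big_geq.
  rewrite invr0 mulr0 !expr0n /= subr0 divr1 !add0r.
  have := sqr_ge0 (g 0%N); lra.
move: (Ps g k.+1) (g k.+1) => x y.
set K := k.+1%:R.
have K0 : 0 < K by rewrite ltr0n.
have e : k.+2%:R = K + 1 by rewrite -natr1.
rewrite e.
have id : 4 * y ^+ 2 + (x ^+ 2 / K - (x + y) ^+ 2 / (K + 1)) - ((x + y) ^+ 2 - x ^+ 2) / (K + 1)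
   = ((x - 2 * K * y) ^+ 2 + 2 * K * y ^+ 2) / (K * (K + 1)).
  field; apply/andP; split; lra.
rewrite -subr_ge0 id; apply: divr_ge0; last by apply: mulr_ge0; lra.
by apply: addr_ge0; [apply: sqr_ge0| apply: mulr_ge0; [lra|apply: sqr_ge0]].
Qed.

Lemma hardy w g n B2 :
  (forall k, 0 <= w k) -> (forall k, 0 <= g k) ->
  (forall s, (s < n)%N -> s.+1%:R * \sum_(s <= i < n) w i <= B2) ->
  \sum_(0 <= i < n) w i * Ps g i.+1 ^+ 2 <= 4 * B2 * \sum_(0 <= i < n) g i ^+ 2.
Proof.
move=> w0 g0 hB.
case: n hB => [|n] hB; first by rewrite !big_geq // mulr0.
have B0 : 0 <= B2.
  apply: le_trans (hB n _) => //; rewrite big_nat1; apply: mulr_ge0 => //.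
rewrite abel.
set Phi := fun k => Ps g k ^+ 2 / k%:R.
apply: (@le_trans _ _ (B2 * \sum_(0 <= k < n.+1) (4 * g k ^+ 2 + (Phi k - Phi k.+1)))).
  rewrite mulr_sumr; apply: ler_sum_nat => k /andP[_ kn].
  have D0 : 0 <= Ps g k.+1 ^+ 2 - Ps g k ^+ 2.
    rewrite subr_ge0 Ps_S; have := @Ps_ge0 g k g0; have := g0 k; nra.
  apply: (@le_trans _ _ ((B2 / k.+1%:R) * (Ps g k.+1 ^+ 2 - Ps g k ^+ 2))).
    apply: ler_wpM2r => //; rewrite ler_pdivlMr ?ltr0n // mulrC; exact: hB.
  rewrite -mulrA; apply: ler_wpM2l => //; rewrite mulrC; exact: hardy_step.
rewrite big_split /= -mulr_sumr.
have -> : \sum_(0 <= i < n.+1) (Phi i - Phi i.+1) = Phi 0%N - Phi n.+1.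
  rewrite -[LHS]opprK -sumrN (eq_bigr (fun i => Phi i.+1 - Phi i)); last by move=> i _; rewrite opprB.
  by rewrite telescope_sumr // opprB.
have P0 : Phi 0%N = 0 by rewrite /Phi invr0 mulr0.
have Pn : 0 <= Phi n.+1 by rewrite /Phi; apply: divr_ge0 => //; apply: sqr_ge0.
rewrite P0 sub0r mulrDr mulrN mulrA; have := mulr_ge0 B0 Pn; lra.
Qed.

Lemma rev_sum (F : nat -> R) N p m : (p <= m <= N)%N ->
  \sum_(p <= i < m) F (N - i.+1)%N = \sum_(N - m <= k < N - p) F k.
Proof.
elim: m => [|m IH] /andP[pm mN].
  by rewrite (_ : p = 0%N) ?subn0 ?big_geq //; lia.
case: (ltngtP p m.+1) pm => // [pm|<-] _; last by rewrite !big_geq.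
rewrite big_nat_recr //= IH; last by apply/andP; split; lia.
rewrite [RHS](@big_ltn _ _ _ (N - m.+1)%N); last by lia.
rewrite addrC; congr (_ + _); congr (\sum_(_ <= _ < _) _); lia.
Qed.

Lemma shift_sum (F : nat -> R) N p m : (p <= m)%N ->
  \sum_(p <= i < m) F (N + i)%N = \sum_(N + p <= k < N + m) F k.
Proof.
elim: m => [|m IH] pm.
  by rewrite (_ : p = 0%N) ?addn0 ?big_geq //; lia.
case: (ltngtP p m.+1) pm => // [pm|<-] _; last by rewrite !big_geq.
rewrite big_nat_recr //= IH; last by lia.
by rewrite addnS [RHS]big_nat_recr //=; lia.
Qed.

Lemma sq_expand (x w : nat -> R) z m n :
  \sum_(m <= k < n) (x k - z) ^+ 2 * w k =
  \sum_(m <= k < n) x k ^+ 2 * w k - 2 * z * \sum_(m <= k < n) x k * w k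
   + z ^+ 2 * \sum_(m <= k < n) w k.
Proof.
rewrite !mulr_sumr -sumrB -big_split /=; apply: eq_bigr => k _; ring.
Qed.

Lemma var_min (x w : nat -> R) z m n : (forall k, 0 <= w k) ->
  \sum_(m <= k < n) (x k - (\sum_(m <= j < n) w j)^-1 * \sum_(m <= j < n) x j * w j) ^+ 2 * w k
  <= \sum_(m <= k < n) (x k - z) ^+ 2 * w k.
Proof.
move=> w0; set mu := \sum_(m <= j < n) w j.
have mu0 : 0 <= mu by apply: sumr_ge0.
have [mup|mue] : 0 < mu \/ mu = 0 by rewrite lt_def; case: eqP; [right|left].
  rewrite !sq_expand; set S1 := \sum_(m <= k < n) x k * w k.
  set M := mu^-1 * S1.
  have eS : S1 = M * mu by rewrite /M mulrC mulrA mulfV ?gt_eqF // mul1r.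
  rewrite -/mu eS; have := mulr_ge0 (ltW mup) (sqr_ge0 (z - M)); nra.
have wz : forall k, (m <= k < n)%N -> w k = 0.
  move=> k kr; move/eqP: mue; rewrite /mu psumr_eq0 /=; last by move=> i _; apply: w0.
  by move/allP/(_ k); rewrite mem_index_iota kr => /(_ isT)/eqP.
rewrite big1_seq ?[X in _ <= X]big1_seq //.
  by move=> k; rewrite mem_index_iota => /wz ->; rewrite mulr0.
by move=> k; rewrite mem_index_iota => /wz ->; rewrite mulr0.
Qed.

Lemma pair_id (x w : nat -> R) m n : \sum_(m <= j < n) w j != 0 ->
  \sum_(m <= k < n) \sum_(m <= l < n) w k * w l * (x k - x l) ^+ 2 =
  2 * (\sum_(m <= j < n) w j) *
  \sum_(m <= k < n) (x k - (\sum_(m <= j < n) w j)^-1 * \sum_(m <= j < n) x j * w j) ^+ 2 * w k.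
Proof.
move=> mu0; rewrite sq_expand.
set mu := \sum_(m <= j < n) w j; set S1 := \sum_(m <= k < n) x k * w k;
set S2 := \sum_(m <= k < n) x k ^+ 2 * w k.
have -> : \sum_(m <= k < n) \sum_(m <= l < n) w k * w l * (x k - x l) ^+ 2 =
   \sum_(m <= k < n) (S2 * w k - 2 * S1 * (x k * w k) + mu * (x k ^+ 2 * w k)).
  apply: eq_bigr => k _.
  have -> : S2 * w k - 2 * S1 * (x k * w k) + mu * (x k ^+ 2 * w k) =
     w k * \sum_(m <= l < n) (x l - x k) ^+ 2 * w l.
    rewrite sq_expand -/S1 -/S2 -/mu; ring.
  by rewrite mulr_sumr; apply: eq_bigr => l _; ring.
rewrite big_split /= sumrB -!mulr_sumr -/mu -/S1 -/S2.
by field.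
Qed.
End H.

Section C.
Variable R : realType.
Implicit Types (z : R[i]).
Local Notation Re := (@complex.Re R).
Local Notation Im := (@complex.Im R).
Lemma cabs_sq z : cabs z ^+ 2 = Re z ^+ 2 + Im z ^+ 2.
Proof. by case: z => x y; rewrite /cabs /= sqr_sqrtr // addr_ge0 // sqr_ge0. Qed.
Lemma cabs_ge0 z : 0 <= cabs z.
Proof. by case: z => x y; rewrite /cabs /= sqrtr_ge0. Qed.
Lemma ReD z1 z2 : Re (z1 + z2) = Re z1 + Re z2. Proof. by case: z1; case: z2. Qed.
Lemma ImD z1 z2 : Im (z1 + z2) = Im z1 + Im z2. Proof. by case: z1; case: z2. Qed.
Lemma ReN z : Re (- z) = - Re z. Proof. by case: z. Qed.
Lemma ImN z : Im (- z) = - Im z. Proof. by case: z. Qed.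
Lemma ReB z1 z2 : Re (z1 - z2) = Re z1 - Re z2. Proof. by rewrite ReD ReN. Qed.
Lemma ImB z1 z2 : Im (z1 - z2) = Im z1 - Im z2. Proof. by rewrite ImD ImN. Qed.
Lemma Re0 : Re (0 : R[i]) = 0. Proof. by []. Qed.
Lemma Im0 : Im (0 : R[i]) = 0. Proof. by []. Qed.
Lemma ReCM (r : R) z : Re (r%:C * z) = r * Re z.
Proof. by case: z => x y /=; rewrite mul0r subr0. Qed.
Lemma ImCM (r : R) z : Im (r%:C * z) = r * Im z.
Proof. by case: z => x y /=; rewrite mul0r addr0. Qed.
Lemma ReMC (r : R) z : Re (z * r%:C) = Re z * r.
Proof. by rewrite mulrC ReCM mulrC. Qed.
Lemma ImMC (r : R) z : Im (z * r%:C) = Im z * r.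
Proof. by rewrite mulrC ImCM mulrC. Qed.
Lemma Re_sum (F : nat -> R[i]) m n : Re (\sum_(m <= i < n) F i) = \sum_(m <= i < n) Re (F i).
Proof. exact: (big_morph _ ReD Re0). Qed.
Lemma Im_sum (F : nat -> R[i]) m n : Im (\sum_(m <= i < n) F i) = \sum_(m <= i < n) Im (F i).
Proof. exact: (big_morph _ ImD Im0). Qed.
Lemma cabs_sum (F : nat -> R[i]) m n : cabs (\sum_(m <= i < n) F i) <= \sum_(m <= i < n) cabs (F i).
Proof.
apply: (big_ind2 (fun x y => cabs x <= y)).
- by rewrite /cabs Normc.normc0.
- move=> x1 x2 y1 y2 h1 h2; apply: le_trans (le_normcD _ _) _; exact: lerD.
- by [].
Qed.
Lemma cabsN z : cabs (- z) = cabs z. Proof. exact: normcN. Qed.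
Lemma cabsM z1 z2 : cabs (z1 * z2) = cabs z1 * cabs z2. Proof. exact: Normc.normcM. Qed.
Lemma cabs_Re z : Re z ^+ 2 <= cabs z ^+ 2.
Proof. rewrite cabs_sq; have := sqr_ge0 (Im z); lra. Qed.
End C.
Section P.
Variable R : realType.
Local Notation Re := (@complex.Re R).
Local Notation Im := (@complex.Im R).
Variables (alpha : nat -> R[i]) (a b : nat).
Implicit Types (f : nat -> R[i]).
Local Notation w k := (cabs (alpha k) ^+ 2).

Definition Vf (f : nat -> R[i]) := \sum_(a <= k < b.+1) cabs (Sf f k - SfI alpha a b f) ^+ 2 * w k.

Lemma w_ge0 k : 0 <= w k. Proof. exact: sqr_ge0. Qed.

Lemma ReSfI f : Re (SfI alpha a b f) =
  (\sum_(a <= j < b.+1) w j)^-1 * \sum_(a <= j < b.+1) Re (Sf f j) * w j.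
Proof. by rewrite /SfI ReCM Re_sum /muI; congr (_ * _); apply: eq_bigr => j _; rewrite ReMC. Qed.
Lemma ImSfI f : Im (SfI alpha a b f) =
  (\sum_(a <= j < b.+1) w j)^-1 * \sum_(a <= j < b.+1) Im (Sf f j) * w j.
Proof. by rewrite /SfI ImCM Im_sum /muI; congr (_ * _); apply: eq_bigr => j _; rewrite ImMC. Qed.

Lemma Vf_split f : Vf f =
  \sum_(a <= k < b.+1) (Re (Sf f k) - (\sum_(a <= j < b.+1) w j)^-1 * \sum_(a <= j < b.+1) Re (Sf f j) * w j) ^+ 2 * w k +
  \sum_(a <= k < b.+1) (Im (Sf f k) - (\sum_(a <= j < b.+1) w j)^-1 * \sum_(a <= j < b.+1) Im (Sf f j) * w j) ^+ 2 * w k.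
Proof.
rewrite /Vf -big_split /=; apply: eq_bigr => k _.
by rewrite cabs_sq ReB ImB ReSfI ImSfI mulrDl.
Qed.

Lemma Vf_min f z : Vf f <= \sum_(a <= k < b.+1) cabs (Sf f k - z) ^+ 2 * w k.
Proof.
rewrite Vf_split.
have -> : \sum_(a <= k < b.+1) cabs (Sf f k - z) ^+ 2 * w k =
  \sum_(a <= k < b.+1) (Re (Sf f k) - Re z) ^+ 2 * w k +
  \sum_(a <= k < b.+1) (Im (Sf f k) - Im z) ^+ 2 * w k.
  by rewrite -big_split /=; apply: eq_bigr => k _; rewrite cabs_sq ReB ImB mulrDl.
apply: lerD.
  exact: (var_min _ (fun k => Re (Sf f k)) (fun k => cabs (alpha k) ^+ 2) (Re z) a b.+1 w_ge0).
exact: (var_min _ (fun k => Im (Sf f k)) (fun k => cabs (alpha k) ^+ 2) (Im z) a b.+1 w_ge0).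
Qed.

Lemma Dsum f k n :
  cabs (\sum_((minn k n).+1 <= j < (maxn k n).+1) f j) = cabs (Sf f k - Sf f n).
Proof.
have gen : forall p q, (p <= q)%N ->
    \sum_(p.+1 <= j < q.+1) f j = Sf f q - Sf f p.
  move=> p q pq; rewrite /Sf (@big_cat_nat _ _ _ p.+1 0 q.+1) //= addrC addrK //.
case: (leqP k n) => kn.
  by rewrite gen // -cabsN opprB.
by rewrite gen //; exact: ltnW.
Qed.

Lemma lIf_eq f : muI alpha a b != 0 ->
  lIf alpha a b f = 2 * muI alpha a b * Vf f.
Proof.
move=> mu0.
rewrite /lIf.
have E : forall k, \sum_(a <= n < b.+1 | n != k)
     cabs (alpha k * alpha n * \sum_((minn k n).+1 <= j < (maxn k n).+1) f j) ^+ 2 =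
   \sum_(a <= n < b.+1) (w k * w n * (Re (Sf f k) - Re (Sf f n)) ^+ 2 +
                         w k * w n * (Im (Sf f k) - Im (Sf f n)) ^+ 2).
  move=> k; rewrite big_mkcond /=; apply: eq_bigr => n _.
  case: eqVneq => [->|_] /=.
    by rewrite !subrr expr0n /= !mulr0 addr0.
  by rewrite !cabsM Dsum !exprMn (cabs_sq _ (Sf f k - Sf f n)) ReB ImB; ring.
under eq_bigr => k _ do rewrite E big_split /=.
rewrite big_split /= !pair_id //.
by rewrite Vf_split mulrDr.
Qed.
End P.
Section P2.
Variable R : realType.
Local Notation Re := (@complex.Re R).
Local Notation Im := (@complex.Im R).
Variables (alpha : nat -> R[i]) (a b : nat).
Implicit Types (f : nat -> R[i]).
Local Notation w k := (cabs (alpha k) ^+ 2).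

Lemma left_diff f c m : (m <= c)%N ->
  Sf f c - Sf f (c - m) = \sum_(0 <= j < m) f (c - j)%N.
Proof.
elim: m => [|m IH] mc; first by rewrite subn0 subrr big_geq.
rewrite big_nat_recr //= -IH; last by lia.
have -> : Sf f (c - m) = Sf f (c - m.+1) + f (c - m)%N.
  have e : (c - m = (c - m.+1).+1)%N by lia.
  by rewrite /Sf {1}e big_nat_recr //= -e.
by rewrite opprD addrA subrK.
Qed.

Lemma right_diff f c m :
  Sf f (c + m) - Sf f c = \sum_(0 <= j < m) f (c.+1 + j)%N.
Proof.
elim: m => [|m IH]; first by rewrite addn0 subrr big_geq.
rewrite big_nat_recr //= -IH addnS /Sf big_nat_recr //=.
by rewrite addrAC addSn.
Qed.

Lemma sq_le (x y : R) : 0 <= x -> x <= y -> x ^+ 2 <= y ^+ 2.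
Proof. move=> x0 xy; nra. Qed.

Lemma Vf_hardy f c A2 B2 : admissible a b f -> (a <= c <= b)%N ->
  (forall s, (a <= s <= c)%N -> (c - s)%:R * \sum_(a <= k < s.+1) w k <= A2) ->
  (forall s, (c <= s <= b)%N -> (s - c)%:R * \sum_(s <= k < b.+1) w k <= B2) ->
  Vf _ alpha a b f <= 4 * Num.max A2 B2.
Proof.
move=> [_ fn] /andP[ac cb] hA hB.
set G := fun j => cabs (f j) ^+ 2.
have g0 : forall j, 0 <= cabs (f j) by move=> j; apply: cabs_ge0.
have G0 : forall j, 0 <= G j by move=> j; apply: sqr_ge0.
have hf : \sum_(a <= j < b.+1) G j <= 1.
  move: fn; rewrite /norm2I => fn.
  have S0 : 0 <= \sum_(a <= j < b.+1) G j by apply: sumr_ge0.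
  by rewrite -(sqr_sqrtr S0); have := sqrtr_ge0 (\sum_(a <= j < b.+1) G j); nra.
have A0 : 0 <= A2 by apply: le_trans (hA c _); rewrite ?subnn ?mul0r //; apply/andP.
have B0 : 0 <= B2 by apply: le_trans (hB c _); rewrite ?subnn ?mul0r //; apply/andP.
apply: le_trans (Vf_min _ alpha a b f (Sf f c)) _.
rewrite (@big_cat_nat _ _ _ c) //=; last by lia.
rewrite (@big_ltn _ _ _ c b.+1) //= subrr /cabs Normc.normc0 expr0n /= mul0r add0r -/(cabs _).
set n := (c - a)%N.
have hL : \sum_(a <= k < c) cabs (Sf f k - Sf f c) ^+ 2 * w k <=
          4 * A2 * \sum_(a.+1 <= k < c.+1) G k.
  have := rev_sum _ (fun k => cabs (Sf f k - Sf f c) ^+ 2 * w k) c 0 n.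
  rewrite subn0 /n subKn // => <-; last by apply/andP; split; lia.
  have := rev_sum _ G c.+1 0 n; rewrite subn0 /n (_ : c.+1 - (c - a) = a.+1)%N; last by lia.
  move=> <-;
    last by apply/andP; split; lia.
  apply: (@le_trans _ _ (\sum_(0 <= i < n) (w (c - i.+1)%N) *
        Ps _ (fun j => cabs (f (c - j)%N)) i.+1 ^+ 2)).
    apply: ler_sum_nat => i /andP[_ iN]; rewrite mulrC; apply: ler_wpM2l; first exact: sqr_ge0.
    apply: sq_le; first exact: cabs_ge0.
    rewrite -cabsN opprB left_diff; last by rewrite /n in iN; lia.
    exact: cabs_sum.
  have -> : \sum_(0 <= i < n) G (c.+1 - i.+1)%N =
            \sum_(0 <= i < n) cabs (f (c - i)%N) ^+ 2 by apply: eq_bigr => i _; rewrite subSS.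
  apply: hardy; [move=> k; exact: w_ge0 | move=> k; exact: cabs_ge0 | move=> s sn].
  have := rev_sum _ (fun k => w k) c s n; rewrite /n subKn // => ->; last by apply/andP; split; lia.
  have := hA (c - s.+1)%N; rewrite (_ : (c - s.+1).+1 = c - s)%N; last by rewrite /n in sn; lia.
  rewrite (_ : (c - (c - s.+1)) = s.+1)%N; last by rewrite /n in sn; lia.
  by apply; apply/andP; split; rewrite /n in sn; lia.
have hR : \sum_(c.+1 <= k < b.+1) cabs (Sf f k - Sf f c) ^+ 2 * w k <=
          4 * B2 * \sum_(c.+1 <= k < b.+1) G k.
  have := shift_sum _ (fun k => cabs (Sf f k - Sf f c) ^+ 2 * w k) c.+1 0 (b - c).
  rewrite addn0 (_ : c.+1 + (b - c) = b.+1)%N; last by lia.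
  move=> /(_ isT) <-.
  have := shift_sum _ G c.+1 0 (b - c).
  rewrite addn0 (_ : c.+1 + (b - c) = b.+1)%N; last by lia.
  move=> /(_ isT) <-.
  apply: (@le_trans _ _ (\sum_(0 <= i < b - c) (w (c.+1 + i)%N) *
        Ps _ (fun j => cabs (f (c.+1 + j)%N)) i.+1 ^+ 2)).
    apply: ler_sum_nat => i /andP[_ iN]; rewrite mulrC; apply: ler_wpM2l; first exact: sqr_ge0.
    apply: sq_le; first exact: cabs_ge0.
    rewrite addSnnS right_diff; exact: cabs_sum.
  apply: hardy; [move=> k; exact: w_ge0 | move=> k; exact: cabs_ge0 | move=> s sn].
  have := shift_sum _ (fun k => w k) c.+1 s (b - c); rewrite (_ : c.+1 + (b - c) = b.+1)%N; last by lia.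
  move=> ->; last by lia.
  have := hB (c.+1 + s)%N; rewrite (_ : (c.+1 + s - c) = s.+1)%N; last by lia.
  by apply; apply/andP; split; lia.
have hsplit : \sum_(a.+1 <= k < c.+1) G k + \sum_(c.+1 <= k < b.+1) G k <= 1.
  rewrite -big_cat_nat //=; try lia.
  apply: le_trans hf; rewrite [X in _ <= X](@big_ltn _ _ _ a) //=; last by lia.
  by rewrite lerDr.
set L := \sum_(a.+1 <= k < c.+1) G k in hL hsplit.
set Rr := \sum_(c.+1 <= k < b.+1) G k in hR hsplit.
have L0 : 0 <= L by apply: sumr_ge0.
have R0 : 0 <= Rr by apply: sumr_ge0.
have mA : A2 <= Num.max A2 B2 by rewrite le_max lexx.
have mB : B2 <= Num.max A2 B2 by rewrite le_max lexx orbT.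
apply: le_trans (lerD hL hR) _.
have : A2 * L + B2 * Rr <= Num.max A2 B2 * (L + Rr) by nra.
have : Num.max A2 B2 * (L + Rr) <= Num.max A2 B2 by nra.
lra.
Qed.
End P2.
Section P3.
Variable R : realType.
Local Notation Re := (@complex.Re R).
Local Notation Im := (@complex.Im R).

Lemma sum_ind (V : zmodType) (v : V) m n s0 s1 : (m <= s0.+1 <= s1.+1)%N -> (s1.+1 <= n)%N ->
  \sum_(m <= j < n) (if (s0 < j <= s1)%N then v else 0) = v *+ (s1 - s0).
Proof.
move=> /andP[h1 h2] h3.
rewrite (@big_cat_nat _ _ _ s0.+1) //=; last by lia.
rewrite (@big_cat_nat _ _ _ s1.+1 s0.+1) //=.
rewrite [X in X + _](eq_big_nat _ _ (F2 := fun _ => 0)); last first.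
  move=> j /andP[_ hj].
  by have -> : (s0 < j <= s1)%N = false by apply/negbTE/negP => /andP[]; lia.
rewrite [X in _ + (_ + X)](eq_big_nat _ _ (F2 := fun _ => 0)); last first.
  move=> j /andP[hj _].
  by have -> : (s0 < j <= s1)%N = false by apply/negbTE/negP => /andP[]; lia.
rewrite sumr_const_nat mul0rn [X in _ + (_ + X)]sumr_const_nat mul0rn.
rewrite add0r addr0 (eq_big_nat _ _ (F2 := fun _ => v)); last first.
  by move=> j /andP[hj hj']; have -> : (s0 < j <= s1)%N = true by apply/andP; split; lia.
by rewrite sumr_const_nat subSS.
Qed.

Variables (alpha : nat -> R[i]) (a b : nat).
Local Notation w k := (cabs (alpha k) ^+ 2).

Lemma test_fn s0 s1 p : (a <= s0)%N -> (s0 < s1)%N -> (s1 <= b)%N -> 0 <= p ->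
  p <= \sum_(a <= k < s0.+1) w k -> p <= \sum_(s1 <= k < b.+1) w k ->
  exists f, admissible a b f /\ (s1 - s0)%:R * p <= 2 * Vf _ alpha a b f.
Proof.
move=> as0 s01 s1b p0 pL pR.
set d : R := (s1 - s0)%:R.
have d0 : 0 < d by rewrite ltr0n; lia.
set r : R := (Num.sqrt d)^-1.
have r2 : r ^+ 2 * d = 1.
  by rewrite /r exprVn sqr_sqrtr ?(ltW d0) // mulVf // gt_eqF.
set f : nat -> R[i] := fun j => if (s0 < j <= s1)%N then r%:C else 0.
set x : R := r *+ (s1 - s0).
have x2 : x ^+ 2 = d.
  rewrite /x -mulr_natr -/d exprMn; rewrite -[RHS]mul1r -r2; ring.
have S0 : forall k, (k <= s0)%N -> Sf f k = 0.
  move=> k ks; rewrite /Sf big1_seq // => j; rewrite mem_index_iota => /andP[_ hj].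
  by rewrite /f; have -> : (s0 < j <= s1)%N = false by apply/negbTE/negP => /andP[]; lia.
have S1 : forall k, (s1 <= k)%N -> Sf f k = x%:C.
  move=> k ks; rewrite /Sf sum_ind; last by lia.
    by rewrite /x rmorphMn.
  by apply/andP; split; lia.
exists f; split; first split.
- move=> j hj; rewrite /f; case: ifP => // /andP[h h']; move: hj; rewrite negb_and -ltnNge -ltnNge; lia.
- have E : forall j, cabs (f j) ^+ 2 = if (s0 < j <= s1)%N then r ^+ 2 else 0.
    move=> j; rewrite /f; case: ifP => _; rewrite cabs_sq.
      by rewrite [complex.Re _]/= [complex.Im _]/= expr0n addr0.
    by rewrite [complex.Re _]/= [complex.Im _]/= expr0n addr0.
  rewrite /norm2I (eq_bigr _ (fun j _ => E j)) sum_ind; last by lia.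
    by rewrite -mulr_natr -/d r2 sqrtr1.
  by apply/andP; split; lia.
set m := SfI alpha a b f.
rewrite /Vf (@big_cat_nat _ _ _ s0.+1) //=; try lia.
rewrite (@big_cat_nat _ _ _ s1 s0.+1) //=; try lia.
set t := Re m.
have h1 : t ^+ 2 * p <= \sum_(a <= k < s0.+1) cabs (Sf f k - m) ^+ 2 * w k.
  apply: le_trans (_ : t ^+ 2 * \sum_(a <= k < s0.+1) w k <= _).
    by apply: ler_wpM2l => //; apply: sqr_ge0.
  rewrite mulr_sumr; apply: ler_sum_nat => k /andP[_ hk].
  rewrite S0; last by lia.
  apply: ler_wpM2r; first exact: sqr_ge0.
  by apply: le_trans (cabs_Re _ _); rewrite ReB /= sub0r sqrrN.
have h2 : (x - t) ^+ 2 * p <= \sum_(s1 <= k < b.+1) cabs (Sf f k - m) ^+ 2 * w k.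
  apply: le_trans (_ : (x - t) ^+ 2 * \sum_(s1 <= k < b.+1) w k <= _).
    by apply: ler_wpM2l => //; apply: sqr_ge0.
  rewrite mulr_sumr; apply: ler_sum_nat => k /andP[hk _].
  rewrite S1 //.
  apply: ler_wpM2r; first exact: sqr_ge0.
  by apply: le_trans (cabs_Re _ _); rewrite ReB.
have h3 : 0 <= \sum_(s0.+1 <= k < s1) cabs (Sf f k - m) ^+ 2 * w k.
  by apply: sumr_ge0 => k _; apply: mulr_ge0; apply: sqr_ge0.
have := mulr_ge0 p0 (sqr_ge0 (2 * t - x)).
rewrite -x2; nra.
Qed.
End P3.
Section P4.
Variable R : realType.
Variables (alpha : nat -> R[i]) (a b : nat).
Implicit Types (f : nat -> R[i]).
Local Notation w k := (cabs (alpha k) ^+ 2).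

Lemma psum_mono m n1 n2 : (m <= n1 <= n2)%N ->
  \sum_(m <= k < n1) w k <= \sum_(m <= k < n2) w k.
Proof.
move=> /andP[h1 h2]; rewrite [X in _ <= X](@big_cat_nat _ _ _ n1) //=.
by rewrite lerDl; apply: sumr_ge0 => k _; exact: w_ge0.
Qed.

Lemma psum_mono_l m1 m2 n : (m1 <= m2 <= n)%N ->
  \sum_(m2 <= k < n) w k <= \sum_(m1 <= k < n) w k.
Proof.
move=> /andP[h1 h2]; rewrite [X in _ <= X](@big_cat_nat _ _ _ m2) //=.
by rewrite lerDr; apply: sumr_ge0 => k _; exact: w_ge0.
Qed.

Lemma sqrt_le_sq (x y : R) : 0 <= y -> x <= y ^+ 2 -> Num.sqrt x <= y.
Proof.
move=> y0 h; apply: le_trans (ler_wsqrtr h) _.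
by rewrite sqrtr_sqr ger0_norm.
Qed.

Lemma le_sq_of_sqrt (x y : R) : 0 <= x -> Num.sqrt x <= y -> x <= y ^+ 2.
Proof.
move=> x0 h; rewrite -(sqr_sqrtr x0); apply: sq_le => //; exact: sqrtr_ge0.
Qed.

Lemma Ac_ub c s : (a <= s <= c)%N ->
  Num.sqrt (c - s)%:R * Num.sqrt (\sum_(a <= k < s.+1) w k) <= Ac alpha a c.
Proof.
move=> hs; apply: sup_upper_bound; last by exists s.
split; first by exists (Num.sqrt (c - s)%:R * Num.sqrt (\sum_(a <= k < s.+1) w k)); exists s.
exists (Num.sqrt c%:R * Num.sqrt (\sum_(a <= k < c.+1) w k)) => y [s' hs' <-].
move: hs' => /andP[h1 h2].
apply: ler_pM; try exact: sqrtr_ge0.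
  by apply: ler_wsqrtr; rewrite ler_nat leq_subr.
by apply: ler_wsqrtr; apply: psum_mono; apply/andP; split; lia.
Qed.

Lemma Bc_ub c s : (c <= s <= b)%N ->
  Num.sqrt (s - c)%:R * Num.sqrt (\sum_(s <= k < b.+1) w k) <= Bc alpha b c.
Proof.
move=> hs; apply: sup_upper_bound; last by exists s.
split; first by exists (Num.sqrt (s - c)%:R * Num.sqrt (\sum_(s <= k < b.+1) w k)); exists s.
exists (Num.sqrt b%:R * Num.sqrt (\sum_(c <= k < b.+1) w k)) => y [s' hs' <-].
move: hs' => /andP[h1 h2].
apply: ler_pM; try exact: sqrtr_ge0.
  by apply: ler_wsqrtr; rewrite ler_nat; lia.
by apply: ler_wsqrtr; apply: psum_mono_l; apply/andP; split; lia.
Qed.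

Lemma Ac_ge0 c : (a <= c)%N -> 0 <= Ac alpha a c.
Proof.
move=> ac; apply: le_trans (Ac_ub c c _); last by rewrite ac leqnn.
by rewrite subnn sqrtr0 mul0r.
Qed.

Lemma Bc_ge0 c : (c <= b)%N -> 0 <= Bc alpha b c.
Proof.
move=> cb; apply: le_trans (Bc_ub c c _); last by rewrite cb leqnn.
by rewrite subnn sqrtr0 mul0r.
Qed.

Lemma Vf_ge0 f : 0 <= Vf _ alpha a b f.
Proof. by apply: sumr_ge0 => k _; apply: mulr_ge0; apply: sqr_ge0. Qed.

Lemma sqrtVf_le f c : admissible a b f -> (a <= c <= b)%N ->
  Num.sqrt (Vf _ alpha a b f) <= 2 * Num.max (Ac alpha a c) (Bc alpha b c).
Proof.
move=> hf hc; have /andP[ac cb] := hc.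
set A := Ac alpha a c; set B := Bc alpha b c.
have A0 : 0 <= A by apply: Ac_ge0.
have B0 : 0 <= B by apply: Bc_ge0.
have hV := Vf_hardy _ alpha a b f c (A ^+ 2) (B ^+ 2) hf hc.
have M0 : 0 <= Num.max A B by rewrite le_max A0.
apply: sqrt_le_sq; first by apply: mulr_ge0.
apply: le_trans (hV _ _) _.
- move=> s hs; apply: le_sq_of_sqrt.
    by apply: mulr_ge0; [apply: ler0n| apply: sumr_ge0 => k _; apply: w_ge0].
  by rewrite sqrtrM ?ler0n //; apply: Ac_ub.
- move=> s hs; apply: le_sq_of_sqrt.
    by apply: mulr_ge0; [apply: ler0n| apply: sumr_ge0 => k _; apply: w_ge0].
  by rewrite sqrtrM ?ler0n //; apply: Bc_ub.
have hA : A ^+ 2 <= Num.max A B ^+ 2 by apply: sq_le => //; rewrite le_max lexx.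
have hB : B ^+ 2 <= Num.max A B ^+ 2 by apply: sq_le => //; rewrite le_max lexx orbT.
have : Num.max (A ^+ 2) (B ^+ 2) <= Num.max A B ^+ 2 by rewrite ge_max hA hB.
rewrite exprMn; lra.
Qed.
End P4.

Local Open Scope classical_set_scope.
Theorem lemma3p6 (R : realType) (alpha : nat -> R[i]) (a b : nat) :
  in_l2 alpha -> (a <= b)%N ->
  JI alpha a b / 2 <= KI alpha a b /\
  KI alpha a b = LI alpha a b / Num.sqrt 2 /\
  KI alpha a b <= 2 * JI alpha a b.
Proof.
move=> _ hab.
set E := [set Num.sqrt (Vf _ alpha a b f) | f in admissible a b].
have KE : KI alpha a b = sup E by [].
set K := KI alpha a b.
set M := fun c => Num.max (Ac alpha a c) (Bc alpha b c).
have M0 : forall c, (a <= c <= b)%N -> 0 <= M c.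
  move=> c /andP[h1 h2]; rewrite le_max; apply/orP; left; exact: Ac_ge0.
have adm0 : admissible a b (fun _ : nat => (0 : R[i])).
  split; first by [].
  rewrite /norm2I big1 ?sqrtr0 // => k _; rewrite /cabs Normc.normc0 expr0n.
  by [].
have En : E !=set0 by exists (Num.sqrt (Vf _ alpha a b (fun _ => 0))); exists (fun _ => 0).
have hsE : has_sup E.
  split => //; exists (2 * M a) => y [f hf <-]; apply: sqrtVf_le => //.
  by rewrite leqnn hab.
have Kel : forall f, admissible a b f -> Num.sqrt (Vf _ alpha a b f) <= K.
  by move=> f hf; rewrite /K KE; apply: sup_upper_bound => //; exists f.
have K0 : 0 <= K by apply: le_trans (Kel _ adm0); exact: sqrtr_ge0.
have KM : forall c, (a <= c <= b)%N -> K <= 2 * M c.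
  move=> c hc; rewrite /K KE; apply: ge_sup => // y [f hf <-]; exact: sqrtVf_le.
set SJ := [set M c | c in [set c : nat | (a <= c <= b)%N]].
have JE : JI alpha a b = inf SJ by [].
have SJn : SJ !=set0 by exists (M a); exists a => //; rewrite /= leqnn hab.
have hlb : has_lbound SJ by exists 0 => y [c hc <-]; exact: M0.
pose mu := \sum_(a <= k < b.+1) cabs (alpha k) ^+ 2.
pose P := fun c => (a <= c)%N && (mu / 2 <= \sum_(a <= k < c.+1) cabs (alpha k) ^+ 2).
have mu0 : 0 <= mu by apply: sumr_ge0 => k _; exact: w_ge0.
have exP : exists c, P c.
  by exists b; rewrite /P hab /= -/mu; lra.
pose c := ex_minn exP.
have [Pc cmin] : P c /\ (forall c', P c' -> (c <= c')%N).
  by rewrite /c; case: ex_minnP.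
have /andP[ac hc] := Pc.
have cb : (c <= b)%N by apply: cmin; rewrite /P hab /= -/mu; lra.
have hAc : Ac alpha a c <= Num.sqrt 2 * K.
  apply: ge_sup; first by exists 0; exists c; [rewrite /= ac leqnn| rewrite subnn sqrtr0 mul0r].
  move=> y [s /andP[hs0 sc] <-].
  case: (ltngtP s c) sc => // [sc|->] _; last first.
    by rewrite subnn sqrtr0 mul0r; apply: mulr_ge0 => //; exact: sqrtr_ge0.
  have hX : \sum_(a <= k < c) cabs (alpha k) ^+ 2 < mu / 2.
    have nP : ~~ P c.-1.
      apply/negP => /cmin; lia.
    move: nP; rewrite /P negb_and (_ : (a <= c.-1)%N = true) /=; last by lia.
    by rewrite -ltNge prednK //; lia.
  have hmu : mu = \sum_(a <= k < c) cabs (alpha k) ^+ 2 + \sum_(c <= k < b.+1) cabs (alpha k) ^+ 2.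
    by rewrite /mu (@big_cat_nat _ _ _ c) //; lia.
  have hW : \sum_(a <= k < s.+1) cabs (alpha k) ^+ 2 <= \sum_(a <= k < c) cabs (alpha k) ^+ 2.
    by apply: psum_mono; apply/andP; split; lia.
  have p0 : 0 <= \sum_(a <= k < s.+1) cabs (alpha k) ^+ 2 by apply: sumr_ge0 => k _; exact: w_ge0.
  have [f [hf hV]] := test_fn _ alpha a b s c _ hs0 sc cb p0 (lexx _) ltac:(lra).
  rewrite -sqrtrM ?ler0n // -[2 in X in _ <= X * _]/(2%:R) .
  apply: le_trans (_ : Num.sqrt (2 * Vf _ alpha a b f) <= _).
    exact: ler_wsqrtr.
  rewrite sqrtrM ?ler0n //; apply: ler_wpM2l; [exact: sqrtr_ge0| exact: Kel].
have hBc : Bc alpha b c <= Num.sqrt 2 * K.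
  apply: ge_sup; first by exists 0; exists c; [rewrite /= cb leqnn| rewrite subnn sqrtr0 mul0r].
  move=> y [s /andP[cs sb] <-].
  case: (ltngtP c s) cs => // [cs|->] _; last first.
    by rewrite subnn sqrtr0 mul0r; apply: mulr_ge0 => //; exact: sqrtr_ge0.
  have hmu : mu = \sum_(a <= k < c.+1) cabs (alpha k) ^+ 2 + \sum_(c.+1 <= k < b.+1) cabs (alpha k) ^+ 2.
    by rewrite /mu (@big_cat_nat _ _ _ c.+1) //; lia.
  have hW : \sum_(s <= k < b.+1) cabs (alpha k) ^+ 2 <= \sum_(c.+1 <= k < b.+1) cabs (alpha k) ^+ 2.
    by apply: psum_mono_l; apply/andP; split; lia.
  have p0 : 0 <= \sum_(s <= k < b.+1) cabs (alpha k) ^+ 2 by apply: sumr_ge0 => k _; exact: w_ge0.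
  have [f [hf hV]] := test_fn _ alpha a b c s _ ac cs sb p0 ltac:(lra) (lexx _).
  rewrite -sqrtrM ?ler0n //.
  apply: le_trans (_ : Num.sqrt (2 * Vf _ alpha a b f) <= _).
    exact: ler_wsqrtr.
  rewrite sqrtrM ?ler0n //; apply: ler_wpM2l; [exact: sqrtr_ge0| exact: Kel].
have s2 : Num.sqrt 2 <= 2 :> R.
  apply: sqrt_le_sq; lra.
have JM : JI alpha a b <= M c.
  by rewrite JE; apply: ge_inf => //; exists c => //; rewrite /= ac cb.
split.
  have : M c <= Num.sqrt 2 * K by rewrite /M ge_max hAc hBc.
  have := mulr_ge0 (sqrtr_ge0 2) K0.
  have := ler_wpM2r K0 s2.
  lra.
split; last first.
  have : K / 2 <= JI alpha a b.
    rewrite JE; apply: lb_le_inf => // y [c' hc' <-].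
    have := KM c' hc'; lra.
  lra.
rewrite /LI; case: eqP => [mue|mune].
  rewrite mul0r; apply/eqP; rewrite eq_le K0 andbT /K KE.
  apply: ge_sup => // y [f hf <-].
  have wz : forall k, (a <= k < b.+1)%N -> cabs (alpha k) ^+ 2 = 0.
    move=> k kr; move/eqP: mue; rewrite /muI psumr_eq0 /=; last by move=> i _; apply: w_ge0.
    by move/allP/(_ k); rewrite mem_index_iota kr => /(_ isT)/eqP.
  rewrite (_ : Vf _ alpha a b f = 0) ?sqrtr0 //.
  rewrite /Vf big1_seq // => k; rewrite mem_index_iota => /wz ->; rewrite mulr0.
  by [].
set E2 := [set lIf alpha a b f / muI alpha a b | f in admissible a b].
have E2el : forall f, admissible a b f -> lIf alpha a b f / muI alpha a b = 2 * Vf _ alpha a b f.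
  move=> f hf; rewrite lIf_eq; last by apply/eqP.
  by field; apply/eqP.
have E2n : E2 !=set0 by exists (lIf alpha a b (fun _ => 0) / muI alpha a b); exists (fun _ => 0).
have hsE2 : has_sup E2.
  split => //; exists (2 * (2 * M a) ^+ 2) => y [f hf <-]; rewrite E2el //.
  rewrite ler_pM2l ?ltr0n //; apply: le_sq_of_sqrt; first exact: Vf_ge0.
  by apply: sqrtVf_le => //; rewrite leqnn hab.
set S := sup E2.
have S2 : forall f, admissible a b f -> 2 * Vf _ alpha a b f <= S.
  by move=> f hf; rewrite -E2el //; apply: sup_upper_bound => //; exists f.
have S0 : 0 <= S by apply: le_trans (S2 _ adm0); apply: mulr_ge0 => //; exact: Vf_ge0.
have hS1 : S <= 2 * K ^+ 2.
  apply: ge_sup => // y [f hf <-]; rewrite E2el // ler_pM2l ?ltr0n //.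
  rewrite -(sqr_sqrtr (Vf_ge0 _ alpha a b f)); apply: sq_le; [exact: sqrtr_ge0| exact: Kel].
have hS2 : K ^+ 2 <= S / 2.
  have S20 : 0 <= S / 2 by lra.
  rewrite -(sqr_sqrtr S20); apply: sq_le => //.
  rewrite /K KE; apply: ge_sup => // y [f hf <-]; apply: ler_wsqrtr.
  have := S2 f hf; lra.
have SE : S = 2 * K ^+ 2 by lra.
rewrite SE sqrtrM ?ler0n // sqrtr_sqr ger0_norm //.
have s20 : 0 < Num.sqrt 2 :> R by rewrite sqrtr_gt0 ltr0n.
by field; rewrite gt_eqF.
Qed.
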